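(* Let $M$ be the All Attack Structure for a plant $G$, observable events $\Sigma_o$, supervisor $S$ realized by $H$, vulnerable events $\Sigma_v$, and secret initial states $X_{sec}\subseteq X_0$. If $q_e$ is an undetectable environment state of $M$, then every environment state of $M$ reachable from $q_e$ is either undetectable or a negative detected state.
   Context: A plant is a finite automaton $G=(X,\Sigma,\delta,X_0)$ with partial transition function $\delta$ (extended to strings) and initial states $X_0\subseteq X$; $\Sigma=\Sigma_o\dot\cup\Sigma_{uo}$. A supervisor $S$ is realized by a deterministic automaton $H=(Z,\Sigma,\xi,z_0)$ (its control decision after a string leading $H$ to $z$ is $\Delta_H(z)$, the set of events defined at $z$; only observable events change the state of $H$). $\Sigma_v\subseteq\Sigma_o$ are vulnerable events and $X_{sec}\subseteq X_0$ secret initial states. Operators: for $q\subseteq X$, $\gamma\subseteq\Sigma$, $\sigma\in\Sigma_o$: $\textsf{UR}_\gamma(q)=\{\delta(x,s):x\in q,s\in(\Sigma_{uo}\cap\gamma)^*\}$, $\textsf{NX}_\sigma(q)=\{\delta(x,\sigma):x\in q\}$, $\textsf{NX}_\epsilon(q)=q$, $\mathcal{O}(q,\gamma)=\{\sigma\in\Sigma_o\cap\gamma:\exists x\in q,\exists w\in(\Sigma_{uo}\cap\gamma)^*,\delta(x,w\sigma)\text{ defined}\}$. Augmented system: states $\tilde X\subseteq X_0\times X$, $\tilde X_0=\{(x_0,x_0):x_0\in X_0\}$, $\tilde\delta((x_0,x),\sigma)=(x_0,\delta(x,\sigma))$; $\widetilde{\textsf{UR}},\widetilde{\textsf{NX}},\mathcal{O}(\tilde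 q,\gamma)$ defined analogously. $I(\tilde q)=\{x_0:(x_0,x)\in\tilde q\text{ for some }x\}$. All Attack Structure: for $\sigma\in\Sigma_o$, $\hat\sigma$ is a doctored copy, $\hat\epsilon$ an erasure symbol; $\mathcal{V}(\sigma)=\{\hat\sigma':\sigma'\in\Sigma_v\}\cup\{\hat\epsilon\}$ if $\sigma\in\Sigma_v$, else $\{\hat\sigma\}$. $M=(Q,\Sigma_M,f,q_0)$, $q_0=(X_0,\tilde X_0,z_0)$, states reachable from $q_0$, $Q=Q_e\dot\cup Q_a$: environment states $(q,\tilde q,z)$ with $q\subseteq X,\tilde q\subseteq\tilde X,z\in Z\cup\{z_{\textsf{att}}\}$ ($z_{\textsf{att}}$ new, $\Delta_H(z_{\textsf{att}})=\emptyset$); attack states $(q,\tilde q,z,\sigma)$. At $(q,\tilde q,z)$ enabled events are $\mathcal{O}(\tilde q,\Delta_H(z))$ if $z\in Z$, none if $z=z_{\textsf{att}}$, with $f((q,\tilde q,z),\sigma)=(q,\tilde q,z,\sigma)$. At $(q,\tilde q,z,\sigma)$ enabled events are $\mathcal{V}(\sigma)$, with $f((q,\tilde q,z,\sigma),\hat\sigma_a)=(q',\tilde q',z')$, $q'=\textsf{NX}_{\sigma_a}(\textsf{UR}_{\Delta_H(z)}(q))$, $\tilde q'=\widetilde{\textsf{NX}}_\sigma(\widetilde{\textsf{UR}}_{\Delta_H(z)}(\tilde q))$, $z'=\xi(z,\sigma_a)$ if $q'\ne\emptyset$ (with $\xi(z,\epsilon)=z$), $z'=z_{\textsf{att}}$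 otherwise. An environment state $(q,\tilde q,z)$ is a negative detected state if $I(\tilde q)\cap X_{sec}=\emptyset$. It is undetectable if (i) $I(\tilde q)\cap X_{sec}\neq\emptyset$, and (ii) for every $(x_0,x)\in\widetilde{\textsf{UR}}_{\Delta_H(z)}(\tilde q)$ with $x_0\in X_{sec}$ there exists $(x_0',x)\in\widetilde{\textsf{UR}}_{\Delta_H(z)}(\tilde q)$ with $x_0'\notin X_{sec}$. *)

(* Defs.v *)
From mathcomp Require Import all_boot.
Set Implicit Arguments. Unset Strict Implicit. Unset Printing Implicit Defensive.

Section Operators.
Variables (Sigma : finType) (obs : {set Sigma}).

Variables (S : finType) (d : S -> Sigma -> option S).

Definition urel (gamma : {set Sigma}) : rel S :=
  fun x y => [exists e, [&& e \in gamma, e \notin obs & d x e == Some y]].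

Definition UR (gamma : {set Sigma}) (q : {set S}) : {set S} :=
  [set y | [exists x in q, connect (urel gamma) x y]].

Definition NX (sigma : Sigma) (q : {set S}) : {set S} :=
  [set y | [exists x in q, d x sigma == Some y]].

(* NX over Sigma_o cup {epsilon}; None stands for epsilon *)
Definition NXo (a : option Sigma) (q : {set S}) : {set S} :=
  match a with Some sigma => NX sigma q | None => q end.

Definition Oset (q : {set S}) (gamma : {set Sigma}) : {set Sigma} :=
  [set sigma | [&& sigma \in obs, sigma \in gamma &
     [exists x in q, exists y, connect (urel gamma) x y && (d y sigma != None)]]].
End Operators.

Section AAS.
Variables (X Sigma Z : finType).
Variables (delta : X -> Sigma -> option X) (X0 : {set X}) (obs : {set Sigma}).
Variables (xi : Z -> Sigma -> option Z) (z0 : Z).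
Variables (Sv : {set Sigma}) (Xsec : {set X}).

(* augmented system on X0 x X (pairs (x0, x)) *)
Definition deltat (p : X * X) (sigma : Sigma) : option (X * X) :=
  omap (fun y => (p.1, y)) (delta p.2 sigma).

Definition Xt0 : {set X * X} := [set (x, x) | x in X0].

Definition Iset (qt : {set X * X}) : {set X} := [set p.1 | p in qt].

(* supervisor states extended with z_att, encoded as None *)
Definition DeltaH (z : option Z) : {set Sigma} :=
  match z with Some z => [set e | xi z e != None] | None => set0 end.

(* xi(z, sigma_a), with xi(z, epsilon) = z; None means undefined *)
Definition xio (z : option Z) (a : option Sigma) : option Z :=
  match z, a with
  | Some z, Some s => xi z s
  | Some z, None => Some z
  | None, _ => None
  end.

(* V(sigma): None stands for epsilon-hat, Some s for s-hat *)
Definition Vset (sigma : Sigma) (a : option Sigma) : bool :=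
  if sigma \in Sv then (match a with None => true | Some s => s \in Sv end)
  else a == Some sigma.

(* states of M: environment states (q, qt, z) and attack states (q, qt, z, sigma);
   z = None encodes z_att *)
Inductive mstate :=
  | Env of {set X} & {set X * X} & option Z
  | Att of {set X} & {set X * X} & option Z & Sigma.

(* events of M: observable events sigma, and doctored copies
   (MHat (Some s) = s-hat, MHat None = epsilon-hat) *)
Inductive mlabel := MObs of Sigma | MHat of option Sigma.

Definition q0 : mstate := Env X0 Xt0 (Some z0).

Definition fM (s : mstate) (l : mlabel) : option mstate :=
  match s, l with
  | Env q qt z, MObs sigma =>
      if sigma \in Oset obs deltat qt (DeltaH z) then Some (Att q qt z sigma)
      else None
  | Att q qt z sigma, MHat a =>
      if Vset sigma a then
        let q' := NXo delta a (UR obs delta (DeltaH z) q) in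
        let qt' := NX deltat sigma (UR obs deltat (DeltaH z) qt) in
        if q' == set0 then Some (Env q' qt' None)
        else match xio z a with
             | Some z' => Some (Env q' qt' (Some z'))
             | None => None
             end
      else None
  | _, _ => None
  end.

Inductive reachM (s : mstate) : mstate -> Prop :=
  | reachM_refl : reachM s s
  | reachM_step s1 l s2 : reachM s s1 -> fM s1 l = Some s2 -> reachM s s2.

Definition negative_detected (s : mstate) : Prop :=
  match s with
  | Env _ qt _ => Iset qt :&: Xsec = set0
  | _ => False
  end.

Definition undetectable (s : mstate) : Prop :=
  match s with
  | Env _ qt z =>
      Iset qt :&: Xsec != set0 /\
      forall x0 x, (x0, x) \in UR obs deltat (DeltaH z) qt -> x0 \in Xsec ->
        exists x0', (x0', x) \in UR obs deltat (DeltaH z) qt /\ x0' \notin Xsec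
  | _ => False
  end.

Definition is_env (s : mstate) : Prop :=
  match s with Env _ _ _ => True | _ => False end.

End AAS.

(* Main.v *)
Require Import Defs.
From mathcomp Require Import all_boot.

Section Aux.
Variables (X Sigma : finType) (delta : X -> Sigma -> option X) (obs : {set Sigma}) (Xsec : {set X}).

Definition Pair (A : {set X * X}) : Prop :=
  forall x0 x, (x0, x) \in A -> x0 \in Xsec -> exists x0', (x0', x) \in A /\ x0' \notin Xsec.

Lemma ustep g a y p : urel obs (deltat delta) g (a, y) p ->
  p.1 = a /\ forall c, urel obs (deltat delta) g (c, y) (c, p.2).
Proof.
move=> /existsP [e /and3P [He Ho /eqP Hd]]. rewrite /deltat /= in Hd.
case E: (delta y e) Hd => [y'|] //= [<-]; split=> // c.
apply/existsP; exists e; by rewrite He Ho /deltat /= E.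
Qed.

Lemma uconn g a x b w : connect (urel obs (deltat delta) g) (a, x) (b, w) ->
  b = a /\ forall c, connect (urel obs (deltat delta) g) (c, x) (c, w).
Proof.
move/connectP=> [p Hp E].
elim: p a x Hp E => [|[a' y'] p IH] a x /=.
  by move=> _ [-> ->]; split=> // c; exact: connect0.
move=> /andP [H1 H2] E.
have [/= e1 e2] := ustep _ _ _ _ H1. subst a'.
have [IH1 IH2] := IH _ _ H2 E.
split=> // c; exact: connect_trans (connect1 (e2 c)) (IH2 c).
Qed.

Lemma Pair_UR g A : Pair A -> Pair (UR obs (deltat delta) g A).
Proof.
move=> HA x0 x; rewrite inE => /existsP [[a y] /andP [Hin Hc]] Hs.
have [ea Hc'] := uconn _ _ _ _ _ Hc. subst a.
have [x0' [Hin' Hns]] := HA _ _ Hin Hs.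
exists x0'; split=> //; rewrite inE; apply/existsP; exists (x0', y).
by rewrite Hin' Hc'.
Qed.

Lemma Pair_NX s A : Pair A -> Pair (NX (deltat delta) s A).
Proof.
move=> HA x0 x; rewrite inE => /existsP [[a y] /andP [Hin /eqP Hd]] Hs.
rewrite /deltat /= in Hd.
case E: (delta y s) Hd => [y'|] //= [ea ey]. subst a y'.
have [x0' [Hin' Hns]] := HA _ _ Hin Hs.
exists x0'; split=> //; rewrite inE; apply/existsP; exists (x0', y).
by rewrite Hin' /deltat /= E.
Qed.
End Aux.

Theorem proposition4 (X Sigma Z : finType)
  (delta : X -> Sigma -> option X) (X0 : {set X}) (obs : {set Sigma})
  (xi : Z -> Sigma -> option Z) (z0 : Z) (Sv : {set Sigma}) (Xsec : {set X}) :
  (* only observable events change the state of H *)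
  (forall z e z', e \notin obs -> xi z e = Some z' -> z' = z) ->
  Sv \subset obs ->
  Xsec \subset X0 ->
  forall qe : mstate X Sigma Z,
    reachM delta obs xi Sv (q0 Sigma X0 z0) qe ->
    is_env qe ->
    undetectable delta obs xi Xsec qe ->
    forall s, reachM delta obs xi Sv qe s -> is_env s ->
      undetectable delta obs xi Xsec s \/ negative_detected Xsec s.
Proof.
move=> _ _ _ qe _ Henv Hu s Hr.
pose Inv (s : mstate X Sigma Z) : Prop := match s with
  | Env _ qt z => @Pair X Xsec (UR obs (deltat delta) (DeltaH xi z) qt)
  | Att _ qt z _ => @Pair X Xsec (UR obs (deltat delta) (DeltaH xi z) qt) end.
have Hinv : Inv s.
  elim: Hr => [|s1 l s2 _ IH Hf].
    case: qe Henv Hu => //= q qt z _ [_ H]; exact: H.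
  case: s1 l IH Hf => [q qt z|q qt z sg] [sg'|a] //= IH.
    by case: ifP => // _ [<-].
  case: ifP => // _.
  have HP : @Pair X Xsec (NX (deltat delta) sg (UR obs (deltat delta) (DeltaH xi z) qt)).
    exact: Pair_NX.
  case: ifP => _.
    by move=> [<-]; exact: Pair_UR.
  by case: xio => // z' [<-]; exact: Pair_UR.
case: s Hr Hinv => //= q qt z _ Hp _.
case: (eqVneq (Iset qt :&: Xsec) set0) => H; [by right | by left].
Qed.
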